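(* Let $w\in K((t^\Gamma))$ have positive value, let $n\in\mathbb N$, and let $\tau=\max\{\nu(f(w))\mid f\in D_n,\ f(w)\ne0\}$. Let $\lambda\in\Gamma$ with $\lambda>\tau$, and $h\in K((t^\Gamma))$ with $\nu(h)=\lambda$. Then for every nonzero $f\in D_n$ one has $f(w+h)\ne0$.
   Context: $K$ is a field, $\Gamma$ a totally ordered abelian group, $K((t^\Gamma))$ the field of formal power series with well ordered support in $\Gamma$ and coefficients in $K$, and $\nu$ its $t$-adic valuation. $R\subset K((t^\Gamma))$ is a local ring essentially of finite type over $K$ dominated by $\nu$, $d=\dim R$, and $R=A_P$ where $A\subset R_\nu$ is a finitely generated $K$-algebra and $P$ is the center of $\nu$ on $A$. Choose $x_1,\dots,x_d\in A$ algebraically independent over $K$ and $b_1,\dots,b_r\in A$ with $A=Bb_1+\cdots+Bb_r$, $B=K[x_1,\dots,x_d]$. For an indeterminate $z$, $D_n=\{f_1b_1+\cdots+f_rb_r\mid f_j\in K[x_1,\dots,x_d,z]$ of total degree $\le n\}\subset A[z]$. $f(w)$ denotes the image of $f$ under $A[z]\to K((t^\Gamma))$, $z\mapsto w$. (The maximum defining $\tau$ exists since the set of values is finite and nonempty.) *)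

(* Defs.v *)
From HB Require Import structures.
From mathcomp Require Import all_boot all_order all_algebra.
Set Implicit Arguments. Unset Strict Implicit. Unset Printing Implicit Defensive.
Import Order.TTheory GRing.Theory Num.Theory.
Local Open Scope ring_scope.

HB.mixin Record isOrderedAbGroup G of Num.POrderedZmodule G := {
  oag_total : total (@Order.le ring_display G);
  oag_lerD2l : forall x y z : G, x <= y -> z + x <= z + y
}.
#[short(type="oagType")]
HB.structure Definition OrderedAbGroup :=
  { G of isOrderedAbGroup G & Num.POrderedZmodule G }.

(* nu : L -> Gamma is a (Krull) valuation on the field L, trivial on the image
   of K under iota.  nu is only meaningful on nonzero elements (nu 0 = +oo is
   not represented; every use of nu is guarded by a nonzeroness condition). *)
Definition is_valuation (K L : fieldType) (G : oagType)
    (iota : {rmorphism K -> L}) (nu : L -> G) : Prop :=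
  [/\ forall x y : L, x != 0 -> y != 0 -> nu (x * y) = nu x + nu y,
      forall x y : L, x != 0 -> y != 0 -> x + y != 0 ->
        (nu x <= nu (x + y)) || (nu y <= nu (x + y))
    & forall k : K, k != 0 -> nu (iota k) = 0].

(* Polynomials in d variables over K with all exponents <= N, given by their
   coefficient function on exponent vectors, evaluated at x : 'I_d -> L. *)
Definition peval (K L : fieldType) (iota : {rmorphism K -> L}) (d N : nat)
    (c : {ffun 'I_d -> 'I_N.+1} -> K) (x : 'I_d -> L) : L :=
  \sum_(e : {ffun 'I_d -> 'I_N.+1}) iota (c e) * \prod_(i < d) x i ^+ e i.

Definition inB (K L : fieldType) (iota : {rmorphism K -> L}) (d : nat)
    (x : 'I_d -> L) (y : L) : Prop :=
  exists N (c : {ffun 'I_d -> 'I_N.+1} -> K), y = peval iota c x.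

Definition alg_indep (K L : fieldType) (iota : {rmorphism K -> L}) (d : nat)
    (x : 'I_d -> L) : Prop :=
  forall N (c : {ffun 'I_d -> 'I_N.+1} -> K),
    peval iota c x = 0 -> forall e, c e = 0.

(* An element f = f_1 b_1 + ... + f_r b_r of D_n, with
   f_j in K[x_1,...,x_d,z] of total degree <= n, is given by coefficients
   F j ex k : K of the monomial x^ex z^k in f_j (only the monomials with
   total degree sum ex + k <= n are used).  As an element of A[z] (here
   viewed inside L[z]) f = \sum_k (Dcoef F k) z^k, and f(u) = Deval F u. *)
Definition Dcoef (K L : fieldType) (iota : {rmorphism K -> L}) (d r n : nat)
    (x : 'I_d -> L) (b : 'I_r -> L)
    (F : 'I_r -> {ffun 'I_d -> 'I_n.+1} -> 'I_n.+1 -> K) (k : 'I_n.+1) : L :=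
  \sum_(j < r) \sum_(ex : {ffun 'I_d -> 'I_n.+1} |
                     (\sum_(i < d) (ex i : nat) + k <= n)%N)
     iota (F j ex k) * (\prod_(i < d) x i ^+ ex i) * b j.

Definition Deval (K L : fieldType) (iota : {rmorphism K -> L}) (d r n : nat)
    (x : 'I_d -> L) (b : 'I_r -> L)
    (F : 'I_r -> {ffun 'I_d -> 'I_n.+1} -> 'I_n.+1 -> K) (u : L) : L :=
  \sum_(k < n.+1) Dcoef iota x b F k * u ^+ k.

(* Main.v *)
Require Import Defs.
From HB Require Import structures.
From mathcomp Require Import all_boot all_order all_algebra.
Import Order.TTheory GRing.Theory Num.Theory.
Local Open Scope ring_scope.
Set Implicit Arguments. Unset Strict Implicit. Unset Printing Implicit Defensive.

Section OAG.
Variable G : oagType.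
Implicit Types a b c d : G.

Lemma g_lerD2l a b c : a <= b -> c + a <= c + b.
Proof. exact: oag_lerD2l. Qed.

Lemma g_lerD a b c d : a <= b -> c <= d -> a + c <= b + d.
Proof.
move=> hab hcd; apply: (le_trans (y := b + c)).
  by rewrite (addrC a) (addrC b); apply: g_lerD2l.
exact: g_lerD2l.
Qed.

Lemma g_ltrD2l a b c : a < b -> c + a < c + b.
Proof.
rewrite !lt_neqAle => /andP[hne hle]; rewrite g_lerD2l // andbT.
by apply: contra hne => /eqP/addrI ->.
Qed.

Lemma g_ltr_leD a b c d : a < b -> c <= d -> a + c < b + d.
Proof.
move=> hab hcd; apply: (lt_le_trans (y := b + c)).
  by rewrite (addrC a) (addrC b); apply: g_ltrD2l.
exact: g_lerD2l.
Qed.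

Lemma g_ge0D a b : 0 <= a -> 0 <= b -> 0 <= a + b.
Proof.
move=> ha hb; apply: (le_trans ha); rewrite -{1}(addr0 a); exact: g_lerD2l.
Qed.

Lemma g_le_addr a b : 0 <= b -> a <= a + b.
Proof. by move=> hb; rewrite -{1}(addr0 a); apply: g_lerD2l. Qed.

Lemma g_mulrn_ge0 a k : 0 <= a -> 0 <= a *+ k.
Proof. by move=> ha; elim: k => [|k IH]; rewrite ?mulr0n // mulrS g_ge0D. Qed.

Lemma g_mulrn_le a k m : 0 <= a -> (k <= m)%N -> a *+ k <= a *+ m.
Proof.
move=> ha hkm; rewrite -(subnKC hkm) mulrnDr; apply: g_le_addr.
exact: g_mulrn_ge0.
Qed.
End OAG.

Section Val.
Variables (K L : fieldType) (G : oagType) (iota : {rmorphism K -> L}) (nu : L -> G).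
Hypothesis Hnu0 : is_valuation iota nu.
Let Hnu : [/\ forall x y : L, x != 0 -> y != 0 -> nu (x * y) = nu x + nu y,
      forall x y : L, x != 0 -> y != 0 -> x + y != 0 ->
        (nu x <= nu (x + y)) || (nu y <= nu (x + y))
    & forall k : K, k != 0 -> nu (iota k) = 0] := Hnu0.

Lemma nuM x y : x != 0 -> y != 0 -> nu (x * y) = nu x + nu y.
Proof. by case: Hnu => h _ _; apply: h. Qed.

Lemma nu1 : nu 1 = 0.
Proof. by case: Hnu => _ _ h; rewrite -(rmorph1 iota) h ?oner_eq0. Qed.

Lemma nuN x : x != 0 -> nu (- x) = nu x.
Proof.
case: Hnu => h1 _ h3 hx; rewrite -mulN1r h1 ?oppr_eq0 ?oner_eq0 //.
by rewrite -(rmorphN1 iota) h3 ?oppr_eq0 ?oner_eq0 // add0r.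
Qed.

Lemma nuX x k : x != 0 -> nu (x ^+ k) = nu x *+ k.
Proof.
move=> hx; elim: k => [|k IH]; first by rewrite expr0 nu1 mulr0n.
by rewrite exprS nuM ?expf_neq0 // IH mulrS.
Qed.

Lemma nuD_ge (c : G) x y : (x = 0 \/ c <= nu x) -> (y = 0 \/ c <= nu y) ->
  (x + y = 0 \/ c <= nu (x + y)).
Proof.
case=> [->|hx]; first by rewrite add0r.
case=> [->|hy]; first by rewrite addr0; right.
have [->|hs] := eqVneq (x + y) 0; first by left.
have [->|x0] := eqVneq x 0; first by rewrite add0r; right.
have [->|y0] := eqVneq y 0; first by rewrite addr0; right.
case: Hnu => _ h2 _; right; case/orP: (h2 _ _ x0 y0 hs) => h.
  exact: le_trans h.
exact: le_trans h.
Qed.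

Lemma nuD_gt (c : G) x y : (x = 0 \/ c < nu x) -> (y = 0 \/ c < nu y) ->
  (x + y = 0 \/ c < nu (x + y)).
Proof.
case=> [->|hx]; first by rewrite add0r.
case=> [->|hy]; first by rewrite addr0; right.
have [->|hs] := eqVneq (x + y) 0; first by left.
have [->|x0] := eqVneq x 0; first by rewrite add0r; right.
have [->|y0] := eqVneq y 0; first by rewrite addr0; right.
case: Hnu => _ h2 _; right; case/orP: (h2 _ _ x0 y0 hs) => h.
  exact: lt_le_trans h.
exact: lt_le_trans h.
Qed.

Lemma nusum_gt (c : G) (I : Type) (s : seq I) (Q : pred I) (F : I -> L) :
  (forall i, Q i -> F i = 0 \/ c < nu (F i)) ->
  \sum_(i <- s | Q i) F i = 0 \/ c < nu (\sum_(i <- s | Q i) F i).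
Proof.
move=> hF; apply: (big_ind (fun s => s = 0 \/ c < nu s)) => //; first by left.
by move=> ???; apply: nuD_gt.
Qed.

Definition Pn (s : L) := s = 0 \/ (0 : G) <= nu s.

Lemma Pn_add x y : Pn x -> Pn y -> Pn (x + y).
Proof. exact: nuD_ge. Qed.

Lemma Pn_mul x y : Pn x -> Pn y -> Pn (x * y).
Proof.
case=> [->|hx]; first by rewrite mul0r; left.
case=> [->|hy]; first by rewrite mulr0; left.
have [->|x0] := eqVneq x 0; first by rewrite mul0r; left.
have [->|y0] := eqVneq y 0; first by rewrite mulr0; left.
by right; rewrite nuM // g_ge0D.
Qed.

Lemma Pn_sum (I : Type) (s : seq I) (Q : pred I) (F : I -> L) :
  (forall i, Q i -> Pn (F i)) -> Pn (\sum_(i <- s | Q i) F i).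
Proof.
move=> hF; apply: (big_ind Pn) => //; first by left.
exact: Pn_add.
Qed.

Lemma Pn1 : Pn 1.
Proof. by right; rewrite nu1. Qed.

Lemma Pn_exp x k : Pn x -> Pn (x ^+ k).
Proof.
move=> hx; elim: k => [|k IH]; first by rewrite expr0; apply: Pn1.
by rewrite exprS; apply: Pn_mul.
Qed.

Lemma Pn_natmul x k : Pn x -> Pn (x *+ k).
Proof.
move=> hx; elim: k => [|k IH]; first by rewrite mulr0n; left.
by rewrite mulrS; apply: Pn_add.
Qed.
End Val.

Lemma sum_widen (R : nmodType) m p (f : nat -> R) : (m <= p)%N ->
  (forall i, (m <= i < p)%N -> f i = 0) -> \sum_(i < m) f i = \sum_(i < p) f i.
Proof.
move=> hmp hf; rewrite -(big_mkord xpredT f) -(big_mkord xpredT f) (big_cat_nat (leq0n m) hmp) /=.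
by rewrite [X in _ + X]big_nat_cond [X in _ + X]big1 ?addr0 // => i /andP[/hf].
Qed.

Section Taylor.
Variables (K L : fieldType) (iota : {rmorphism K -> L}) (d r n : nat)
  (x : 'I_d -> L) (b : 'I_r -> L)
  (F : 'I_r -> {ffun 'I_d -> 'I_n.+1} -> 'I_n.+1 -> K).

Definition gm (w : L) (m : nat) : L :=
  \sum_(k < n.+1) Dcoef iota x b F k * w ^+ (k - m) *+ 'C(k, m).

Lemma taylor w h : Deval iota x b F (w + h) = \sum_(m < n.+1) h ^+ m * gm w m.
Proof.
rewrite /Deval.
transitivity (\sum_(k < n.+1) \sum_(i < n.+1)
    Dcoef iota x b F k * (w ^+ (k - i) * h ^+ i *+ 'C(k, i))).
  apply: eq_bigr => k _; rewrite exprDn mulr_sumr.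
  apply: (@sum_widen _ _ _ (fun i => Dcoef iota x b F k * (w ^+ (k - i) * h ^+ i *+ 'C(k, i)))).
    exact: ltn_ord.
  by move=> i /andP[hi _]; rewrite bin_small // mulr0n mulr0.
rewrite exchange_big /=; apply: eq_bigr => i _; rewrite /gm mulr_sumr.
apply: eq_bigr => k _; rewrite mulrnAr mulrnAr; congr (_ *+ _).
by rewrite mulrA mulrC.
Qed.

Definition Fsh (m : nat) : 'I_r -> {ffun 'I_d -> 'I_n.+1} -> 'I_n.+1 -> K :=
  fun j ex k' => if (\sum_(i < d) (ex i : nat) + k' + m <= n)%N
                 then F j ex (inord (k' + m)) *+ 'C(k' + m, m) else 0.

Lemma Dcoef_Fsh m (k' : 'I_n.+1) : Dcoef iota x b (Fsh m) k' =
  if (k' + m <= n)%N then Dcoef iota x b F (inord (k' + m)) *+ 'C(k' + m, m) else 0.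
Proof.
rewrite /Dcoef; case: ifP => hk.
  rewrite -sumrMnl; apply: eq_bigr => j _; rewrite -sumrMnl inordK ?ltnS // big_mkcond [RHS]big_mkcond /=.
  apply: eq_bigr => ex _; rewrite /Fsh -addnA.
  case: (boolP (\sum_(i < d) (ex i : nat) + (k' + m) <= n)%N) => h1; last first.
    by rewrite rmorph0 !mul0r if_same.
  rewrite /=.
  have -> : (\sum_(i < d) (ex i : nat) + k' <= n)%N.
    by apply: leq_trans h1; rewrite leq_add2l leq_addr.
  by rewrite rmorphMn !mulrnAl.
apply: big1 => j _; apply: big1 => ex _; rewrite /Fsh -addnA.
have -> : (\sum_(i < d) (ex i : nat) + (k' + m) <= n)%N = false.
  by apply/negbTE; rewrite -ltnNge; apply: leq_trans (leq_addl _ _); rewrite ltnNge hk.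
by rewrite rmorph0 !mul0r.
Qed.

Lemma Deval_Fsh w m : (m <= n)%N -> Deval iota x b (Fsh m) w = gm w m.
Proof.
move=> hm; rewrite /Deval /gm.
under eq_bigr => k _ do rewrite Dcoef_Fsh.
pose cn k := Dcoef iota x b F (inord k).
transitivity (\sum_(0 <= k < n.+1)
   (if (k + m <= n)%N then cn (k + m) *+ 'C(k + m, m) else 0) * w ^+ k).
  by rewrite big_mkord.
transitivity (\sum_(0 <= k < n.+1) cn k * w ^+ (k - m) *+ 'C(k, m)); last first.
  by rewrite big_mkord; apply: eq_bigr => k _; rewrite /cn inord_val.
have hsub : (n.+1 - m <= n.+1)%N by apply: leq_subr.
rewrite (big_cat_nat (leq0n _) hsub) /=.
rewrite [X in _ + X]big_nat_cond [X in _ + X]big1 ?addr0; last first.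
  move=> i /andP[/andP[hi _] _]; case: ifP => hh; last by rewrite mul0r.
  by move: hi; rewrite leq_subLR (addnC m) ltnNge hh.
have hm1 : (m <= n.+1)%N by apply: leqW.
rewrite [RHS](big_cat_nat (leq0n m) hm1) /=.
rewrite [X in _ = X + _]big_nat_cond [X in _ = X + _]big1 ?add0r; last first.
  by move=> i /andP[/andP[_ hi] _]; rewrite bin_small // mulr0n.
rewrite -{1}[in RHS](add0n m) big_addn; apply: eq_big_nat => i /andP[_ hi].
have -> : (i + m <= n)%N by move: hi; rewrite ltn_subRL addnC ltnS.
by rewrite addnK mulrnAl.
Qed.
End Taylor.

Theorem mainTheorem9
  (K L : fieldType) (G : oagType)
  (iota : {rmorphism K -> L}) (nu : L -> G)
  (Hnu : is_valuation iota nu)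
  (d r : nat) (x : 'I_d -> L) (b : 'I_r -> L) (A : L -> Prop)
  (* A is a K-subalgebra of L contained in the valuation ring R_nu *)
  (HA1 : A 1) (HAmul : forall a a', A a -> A a' -> A (a * a'))
  (HAnu : forall a, A a -> a != 0 -> 0 <= nu a)
  (* x_1..x_d in A, algebraically independent over K *)
  (HxA : forall i, A (x i)) (Hxind : alg_indep iota x)
  (* A = B b_1 + ... + B b_r with B = K[x_1..x_d] *)
  (HAB : forall a, A a <->
     exists g : 'I_r -> L, (forall j, inB iota x (g j)) /\ a = \sum_(j < r) g j * b j)
  (w : L) (Hw : w != 0 -> 0 < nu w)
  (n : nat) (tau : G)
  (Htau_attained : exists (F : 'I_r -> {ffun 'I_d -> 'I_n.+1} -> 'I_n.+1 -> K), Deval iota x b F w != 0 /\ nu (Deval iota x b F w) = tau)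
  (Htau_max : forall (F : 'I_r -> {ffun 'I_d -> 'I_n.+1} -> 'I_n.+1 -> K), Deval iota x b F w != 0 -> nu (Deval iota x b F w) <= tau)
  (lam : G) (Hlam : tau < lam) (h : L) (Hh0 : h != 0) (Hh : nu h = lam) :
  forall F : 'I_r -> {ffun 'I_d -> 'I_n.+1} -> 'I_n.+1 -> K,
    (exists k : 'I_n.+1, Dcoef iota x b F k != 0) ->
    Deval iota x b F (w + h) != 0.
Proof.
move=> F [k0 hk0].
have PA : forall a, A a -> Pn nu a.
  by move=> a ha; have [->|a0] := eqVneq a 0; [left|right; apply: HAnu].
have Pw : Pn nu w.
  by have [->|w0] := eqVneq w 0; [left|right; apply: ltW; apply: Hw].
have DcA : forall (F' : 'I_r -> {ffun 'I_d -> 'I_n.+1} -> 'I_n.+1 -> K) (k : 'I_n.+1), A (Dcoef iota x b F' k).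
  move=> F' k; apply/(HAB (Dcoef iota x b F' k)).
  exists (fun j => \sum_(ex : {ffun 'I_d -> 'I_n.+1} |
                     (\sum_(i < d) (ex i : nat) + k <= n)%N)
     iota (F' j ex k) * (\prod_(i < d) x i ^+ ex i)); split.
    move=> j; exists n, (fun e : {ffun 'I_d -> 'I_n.+1} => if (\sum_(i < d) (e i : nat) + k <= n)%N
                                then F' j e k else 0).
    rewrite /peval big_mkcond; apply: eq_bigr => e _.
    by case: ifP => _ //; rewrite rmorph0 mul0r.
  by rewrite /Dcoef; apply: eq_bigr => j _; rewrite mulr_suml.
have PD : forall (F' : 'I_r -> {ffun 'I_d -> 'I_n.+1} -> 'I_n.+1 -> K), Pn nu (Deval iota x b F' w).
  move=> F'; apply: (Pn_sum Hnu) => k _; apply: (Pn_mul Hnu); first exact: PA.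
  exact: (Pn_exp Hnu).
have Pg : forall m, Pn nu (gm iota x b F w m).
  move=> m; apply: (Pn_sum Hnu) => k _; apply: (Pn_natmul Hnu); apply: (Pn_mul Hnu); first exact: PA.
  exact: (Pn_exp Hnu).
have tau0 : 0 <= tau.
  case: Htau_attained => F1 [h1 h2]; case: (PD F1) => [h3|]; last by rewrite h2.
  by rewrite h3 eqxx in h1.
have lam0 : 0 <= lam by apply: ltW; apply: le_lt_trans Hlam.
have gtau : forall m, (m <= n)%N -> gm iota x b F w m != 0 ->
    nu (gm iota x b F w m) <= tau.
  by move=> m hm; rewrite -Deval_Fsh //; apply: Htau_max.
set g := gm iota x b F w.
set c := Dcoef iota x b F.
have exP : exists k, (k < n.+1)%N && (c (inord k) != 0).
  by exists k0; rewrite ltn_ord inord_val.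
have ubP : forall k, (k < n.+1)%N && (c (inord k) != 0) -> (k <= n)%N.
  by move=> k /andP[].
case: (ex_maxnP exP ubP) => t /andP[ht hct] tmax.
have gt : g t = c (inord t).
  rewrite /g /gm (bigD1 (inord t)) //= inordK // subnn expr0 mulr1 binn mulr1n.
  rewrite big1 ?addr0 // => k hk.
  have [hlt|hge] := ltnP k t; first by rewrite bin_small // mulr0n.
  rewrite -/c; case: (eqVneq (c k) 0) => [->|hck]; first by rewrite mul0r mul0rn.
  exfalso; have := tmax k; rewrite ltn_ord inord_val hck => /(_ isT) hkt.
  have ekt : (k : nat) = t by apply/eqP; rewrite eqn_leq hkt hge.
  by move: hk; rewrite -ekt inord_val eqxx.
have gt0 : g t != 0 by rewrite gt.
have exQ : exists m, g m != 0 by exists t.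
case: (ex_minnP exQ) => m0 gm0 m0min.
have hm0t : (m0 <= t)%N by apply: m0min.
have hm0n : (m0 < n.+1)%N by apply: leq_ltn_trans hm0t ht.
rewrite taylor -/g -(big_mkord xpredT (fun m => h ^+ m * g m)).
rewrite (big_cat_nat (leq0n m0) (ltnW hm0n)) /=.
rewrite [X in X + _]big_nat_cond [X in X + _]big1 ?add0r; last first.
  move=> i /andP[/andP[_ hi] _]; case: (eqVneq (g i) 0) => [->|hgi].
    by rewrite mulr0.
  by move: (m0min i hgi); rewrite leqNgt hi.
rewrite big_ltn //.
set X := h ^+ m0 * g m0.
set Y := \sum_(m0.+1 <= i < n.+1) h ^+ i * g i.
set c0 := lam *+ m0 + tau.
have X0 : X != 0 by rewrite mulf_neq0 // expf_neq0.
have hX : nu X <= c0.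
  rewrite /X (nuM Hnu) ?expf_neq0 // (nuX Hnu) // Hh; apply: g_lerD2l; apply: gtau => //.
have hY : Y = 0 \/ c0 < nu Y.
  rewrite /Y big_nat_cond; apply: (nusum_gt Hnu) => // i /andP[/andP[hi1 hi2] _].
  case: (eqVneq (g i) 0) => [->|hgi]; first by left; rewrite mulr0.
  right; rewrite (nuM Hnu) ?expf_neq0 // (nuX Hnu) // Hh.
  apply: (lt_le_trans (y := lam *+ m0 + lam)); first exact: g_ltrD2l.
  rewrite -mulrSr; apply: (le_trans (y := lam *+ i)); first exact: g_mulrn_le.
  by apply: g_le_addr; case: (Pg i) => // /eqP; rewrite (negbTE hgi).
case: hY => [->|hlt]; first by rewrite addr0.
apply/eqP => hs.
have hY' : Y = - X by rewrite -[Y](addKr X) hs addr0.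
have := le_lt_trans hX hlt; rewrite hY' (nuN Hnu) // ltxx; done.
Qed.
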